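(* Let $(N,\mathcal{M})$ be a matroid of rank $K\ge 1$ and $Z:2^N\to\mathbb{R}$ a monotone submodular function with $Z(\emptyset)=0$ and curvature $c$. Let $\Omega$ be an optimal basis, i.e. $\Omega\in\mathcal{M}$, $|\Omega|=K$ and $Z(\Omega)=\max\{Z(S):S\in\mathcal{M}\}$, and assume $Z(\Omega)>0$. Let $G=G^K$ be the output of any run of the GREEDY algorithm (with arbitrary tie-breaking), with discriminants $d_i$ and index $i_0$ as defined in the context, and let $d_{\min}=\min_{i<i_0} d_i$ (with $d_{\min}=\infty$ if there is no $i<i_0$). Then $$\frac{Z(G)}{Z(\Omega)}\;\ge\;\min\left(1,\ \frac{1}{c+\max_{i<i_0}\frac{1}{d_i}}\right)=\min\left(1,\ \frac{1}{c+\frac{1}{d_{\min}}}\right),$$ with the conventions $1/\infty=0$ and $1/0=\infty$ (so the right-hand side is $1$ when $c+1/d_{\min}=0$).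
   Context: A matroid $(N,\mathcal{M})$ on a finite ground set $N$ is a family $\mathcal{M}\subseteq 2^N$ of ''independent sets'' with $\emptyset\in\mathcal{M}$, closed under taking subsets, and satisfying augmentation: if $S,T\in\mathcal{M}$ and $|T|>|S|$ then there is $x\in T\setminus S$ with $S\cup\{x\}\in\mathcal{M}$. Its rank $K$ is the maximum cardinality of an independent set; a basis is an independent set of cardinality $K$. For $S\subseteq N$ and $q\in N$, $\rho_q(S)=Z(S\cup\{q\})-Z(S)$. $Z$ is monotone if $Z(S)\le Z(T)$ for $S\subseteq T$, and submodular if $\rho_x(T)\le\rho_x(S)$ whenever $S\subseteq T\subseteq N$, $x\notin T$. The curvature of $Z$ is $c=1-\min\{\rho_j(S)/\rho_j(\emptyset): S\subseteq N,\ j\in N\setminus S,\ \rho_j(\emptyset)>0\}$. For $S\subseteq N$, $S_\bot=\{j\in N\setminus S: S\cup\{j\}\in\mathcal{M}\}$. GREEDY algorithm: set $G^0=\emptyset$; for $i=1,\dots,K$, choose $g_i\in\arg\max\{\rho_q(G^{i-1}): q\in G^{i-1}_\bot\}$ (ties broken arbitrarily) and set $G^i=G^{i-1}\cup\{g_i\}$; output $G=G^K$. Write $\rho_i=\rho_{g_i}(G^{i-1})$. Discriminant at iteration $i$: $d_i=\rho_{g_i}(G^{i-1})/\max\{\rho_{g'}(G^{i-1}): g'\in G^{i-1}_\bot,\ g'\neq g_i\}$, with $d_i=\infty$ if that maximum is $0$. $i_0=\min\{i\in\{1,\dots,K\}: |G^{i-1}_\bot|=K-i+1\}$ (this set is nonempty,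 since $|G^{K-1}_\bot|\ge 1$ and any larger value would allow independent sets of size $K+1$... in any case set $i_0=K+1$ if it is empty). *)

(* Defs.v *)
From HB Require Import structures.
From mathcomp Require Import all_boot all_order all_algebra.
Set Implicit Arguments. Unset Strict Implicit. Unset Printing Implicit Defensive.
Import Order.TTheory GRing.Theory Num.Theory.
Local Open Scope ring_scope.

Section Defs.
Variable T : finType.

Definition is_matroid (indep : {set T} -> bool) : Prop :=
  [/\ indep set0,
      (forall S U : {set T}, U \subset S -> indep S -> indep U) &
      (forall S U : {set T}, indep S -> indep U -> (#|S| < #|U|)%N ->
         exists2 x, x \in U :\: S & indep (x |: S))].

Definition is_rank (indep : {set T} -> bool) (K : nat) : Prop :=
  (exists2 S, indep S & #|S| = K) /\ (forall S, indep S -> (#|S| <= K)%N).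

Definition sbot (indep : {set T} -> bool) (S : {set T}) : {set T} :=
  [set j | (j \notin S) && indep (j |: S)].

Variable R : realFieldType.

Definition rho (Z : {set T} -> R) (q : T) (S : {set T}) : R :=
  Z (q |: S) - Z S.

Definition monotone (Z : {set T} -> R) : Prop :=
  forall S U : {set T}, S \subset U -> Z S <= Z U.

Definition submodular (Z : {set T} -> R) : Prop :=
  forall (S U : {set T}) (x : T), S \subset U -> x \notin U ->
    rho Z x U <= rho Z x S.

(** c is the curvature of Z:
    c = 1 - min { rho_j(S)/rho_j(emptyset) : j notin S, rho_j(emptyset) > 0 }
    (stated as "c = 1 - m where m is attained and is a lower bound"). *)
Definition is_curvature (Z : {set T} -> R) (c : R) : Prop :=
  (exists (S : {set T}) (j : T), [/\ j \notin S, 0 < rho Z j set0 &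
                   c = 1 - rho Z j S / rho Z j set0]) /\
  (forall (S : {set T}) (j : T), j \notin S -> 0 < rho Z j set0 ->
                   1 - rho Z j S / rho Z j set0 <= c).

(** A run of GREEDY of length K is encoded by g : 'I_K -> T, where
    g k is the element chosen at iteration k+1 (0-based indexing). *)
Definition Gset (K : nat) (g : 'I_K -> T) (k : nat) : {set T} :=
  [set g j | j : 'I_K & (j < k)%N].

Definition is_greedy_run (indep : {set T} -> bool) (Z : {set T} -> R)
    (K : nat) (g : 'I_K -> T) : Prop :=
  forall k : 'I_K,
    g k \in sbot indep (Gset g k) /\
    (forall q, q \in sbot indep (Gset g k) ->
       rho Z q (Gset g k) <= rho Z (g k) (Gset g k)).

(** max { rho_{g'}(G^k) : g' in G^k_bot, g' <> g_k } (values are >= 0 for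
    monotone Z, so using 0 as the neutral element is harmless). *)
Definition second_max (indep : {set T} -> bool) (Z : {set T} -> R)
    (K : nat) (g : 'I_K -> T) (k : 'I_K) : R :=
  \big[Num.max/0]_(q in sbot indep (Gset g k) | q != g k) rho Z q (Gset g k).

(** 1/d at iteration k+1, with d = rho_{g}(G^k)/second_max, and d = oo
    (so 1/d = 0) when second_max = 0. *)
Definition inv_disc (indep : {set T} -> bool) (Z : {set T} -> R)
    (K : nat) (g : 'I_K -> T) (k : 'I_K) : R :=
  let m := second_max indep Z g k in
  if m == 0 then 0 else m / rho Z (g k) (Gset g k).

(** i_0 (1-based) = min { i in 1..K : |G^(i-1)_bot| = K-i+1 }, or K+1. *)
Definition i0 (indep : {set T} -> bool) (K : nat) (g : 'I_K -> T) : nat :=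
  (find (fun k => #|sbot indep (Gset g k)| == (K - k)%N) (iota 0 K)).+1.

(** max_{i < i_0} 1/d_i  (= 1/d_min), equal to 0 if there is no i < i_0. *)
Definition inv_dmin (indep : {set T} -> bool) (Z : {set T} -> R)
    (K : nat) (g : 'I_K -> T) : R :=
  \big[Num.max/0]_(k : 'I_K | (k.+1 < i0 indep g)%N) inv_disc indep Z g k.

End Defs.

(* Main.v *)
Require Import Defs.
From HB Require Import structures.
From mathcomp Require Import all_boot all_order all_algebra.
From mathcomp Require Import lra.
Import Order.TTheory GRing.Theory Num.Theory.
Local Open Scope ring_scope.

Section Proof.
Variables (T : finType) (R : realFieldType) (indep : {set T} -> bool) (K : nat)
  (Z : {set T} -> R) (c : R) (g : 'I_K -> T).
Hypotheses (Hm : is_matroid indep) (Hmono : monotone Z) (Hsub : submodular Z)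
  (HZ0 : Z set0 = 0) (Hcurv : is_curvature Z c) (Hg : is_greedy_run indep Z g).

Lemma rho_ge0 x (S : {set T}) : 0 <= rho Z x S.
Proof. rewrite /rho subr_ge0; apply: Hmono; exact: subsetUr. Qed.

Lemma submod_gen x (S U : {set T}) : S \subset U -> rho Z x U <= rho Z x S.
Proof.
move=> SU; case xU: (x \in U).
  rewrite /rho (setUidPr _) ?sub1set // subrr; exact: rho_ge0.
by apply: Hsub => //; rewrite xU.
Qed.

Lemma c_le1 : c <= 1.
Proof.
case: Hcurv => [[S [j [_ hp ->]]] _].
have : 0 <= rho Z j S / rho Z j set0 by rewrite divr_ge0 ?rho_ge0 // ltW.
lra.
Qed.

Lemma curv_lb x (U : {set T}) : x \notin U -> (1 - c) * rho Z x set0 <= rho Z x U.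
Proof.
move=> xU; case hp: (0 < rho Z x set0).
  have := Hcurv.2 U x xU hp => h.
  rewrite -ler_pdivlMr //; lra.
have h0 : rho Z x set0 = 0.
  by apply/eqP; rewrite eq_le rho_ge0 andbT leNgt hp.
by rewrite h0 mulr0 rho_ge0.
Qed.

Lemma memGset x i : reflect (exists2 j : 'I_K, (j < i)%N & x = g j) (x \in Gset g i).
Proof.
apply: (iffP imsetP) => [[j]|[j]]; rewrite ?inE => hj ->; by exists j; rewrite ?inE.
Qed.

Lemma Gset0 : Gset g 0 = set0.
Proof. by apply/setP => x; rewrite inE; apply/memGset => -[]. Qed.

Lemma GsetS (k : 'I_K) : Gset g k.+1 = g k |: Gset g k.
Proof.
apply/setP => x; rewrite inE; apply/memGset/orP.
  move=> [j]; rewrite ltnS leq_eqVlt => /orP[/eqP jk ->|jk ->].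
    have -> : j = k by apply: val_inj.
    by left; rewrite in_set1.
  by right; apply/memGset; exists j.
move=> [/set1P ->|/memGset [j jk ->]]; first by exists k.
by exists j => //; apply: ltnW.
Qed.

Lemma Gset_mono i j : (i <= j)%N -> Gset g i \subset Gset g j.
Proof.
move=> ij; apply/subsetP => x /memGset [k ki ->]; apply/memGset; exists k => //.
exact: leq_trans ki ij.
Qed.

Lemma g_notin k : g k \notin Gset g k.
Proof. by have := (Hg k).1; rewrite inE => /andP[]. Qed.

Lemma indep_gk k : indep (g k |: Gset g k).
Proof. by have := (Hg k).1; rewrite inE => /andP[]. Qed.

Lemma g_inj : injective g.
Proof.
have H : forall i j : 'I_K, (i < j)%N -> g i != g j.
  move=> i j ij; apply/eqP => e; have := g_notin j; rewrite -e.
  by move/negP; apply; apply/memGset; exists i.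
move=> i j e; case: (ltngtP i j) => h.
- by have := H _ _ h; rewrite e eqxx.
- by have := H _ _ h; rewrite e eqxx.
- exact: val_inj.
Qed.

Lemma card_Gset i : (i <= K)%N -> #|Gset g i| = i.
Proof.
elim: i => [|i IH] hi; first by rewrite Gset0 cards0.
have := GsetS (Ordinal hi) => /= ->.
by rewrite cardsU1 g_notin IH // ltnW.
Qed.

Lemma indep_Gset i : (i <= K)%N -> indep (Gset g i).
Proof.
case: i => [|i] hi; first by rewrite Gset0; case: Hm.
have := GsetS (Ordinal hi) => /= ->; exact: indep_gk.
Qed.

Lemma sum_split (i : nat) (Hi : (i < K)%N) (P : pred 'I_K) (F : 'I_K -> R) :
  \sum_(k : 'I_K | (k < i.+1)%N && P k) F k =
  (if P (Ordinal Hi) then F (Ordinal Hi) else 0) + \sum_(k : 'I_K | (k < i)%N && P k) F k.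
Proof.
case: ifP => Pk.
  rewrite (bigD1 (Ordinal Hi)) /= ?ltnSn ?Pk //; congr (_ + _).
  apply: eq_bigl => k; rewrite -val_eqE /= ltnS leq_eqVlt.
  case: (eqVneq (val k) i) => [ki|kni] /=; first by rewrite ki ltnn andbF.
  by rewrite andbT.
rewrite add0r; apply: eq_bigl => k; rewrite ltnS leq_eqVlt.
case: (eqVneq (val k) i) => [ki|kni] /=; last by [].
have -> : k = Ordinal Hi by apply: val_inj.
by rewrite Pk /= ltnn andbF.
Qed.

Lemma sum_le_Z (P : pred 'I_K) i : (i <= K)%N ->
  \sum_(k : 'I_K | (k < i)%N && P k) rho Z (g k) (Gset g k) <= Z (Gset g i).
Proof.
elim: i => [|i IH] hi.
  by rewrite big_pred0 // Gset0 HZ0.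
rewrite (@sum_split i hi) (GsetS (Ordinal hi)) /=.
have := IH (ltnW hi); have := rho_ge0 (g (Ordinal hi)) (Gset g i).
rewrite /rho /=; case: ifP => _; lra.
Qed.

Lemma hered (S U : {set T}) : U \subset S -> indep S -> indep U.
Proof. by case: Hm => _ H _; apply: H. Qed.

Lemma memG (j : 'I_K) : g j \in Gset g K.
Proof. by apply/memGset; exists j. Qed.

Lemma not_before_i0 (k : 'I_K) o :
  o \in sbot indep (Gset g k) -> o \notin Gset g K -> (k.+1 < i0 indep g)%N.
Proof.
move=> ho hoG; rewrite /i0 ltnS ltnNge; apply/negP => hf.
set a := (fun k0 => #|sbot indep (Gset g k0)| == (K - k0)%N) in hf.
set f := find a (iota 0 K) in hf.
have fK : (f < K)%N by apply: leq_ltn_trans hf (ltn_ord k).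
have hs : has a (iota 0 K) by rewrite has_find size_iota.
have := nth_find 0%N hs; rewrite -/f nth_iota // add0n /a => /eqP hcard.
have sub : o |: (Gset g K :\: Gset g f) \subset sbot indep (Gset g f).
  apply/subsetP => x; rewrite !inE => /orP[/eqP ->|/andP[xf /memGset [j _ xj]]].
    move: ho; rewrite inE => /andP[ok ik]; apply/andP; split.
      apply: contra ok; apply/subsetP; exact: Gset_mono.
    by apply: hered ik; apply: setUS; apply: Gset_mono.
  rewrite xf /=; subst x.
  have jf : (f <= j)%N.
    rewrite leqNgt; apply/negP => jf; move/negP: xf; apply; apply/memGset.
    by exists j.
  by apply: hered (indep_gk j); apply: setUS; apply: Gset_mono.
have := subset_leq_card sub; rewrite hcard cardsU1 cardsD.
have fK' := ltnW fK.
rewrite (setIidPr (@Gset_mono f K fK')) !card_Gset //.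
by rewrite inE (negbTE hoG) andbF /= add1n ltnn.
Qed.

Lemma rho_le_delta (k : 'I_K) o :
  o \in sbot indep (Gset g k) -> o != g k -> (k.+1 < i0 indep g)%N ->
  rho Z o (Gset g k) <= inv_dmin indep Z g * rho Z (g k) (Gset g k).
Proof.
move=> ho ok hk.
have hom : rho Z o (Gset g k) <= second_max indep Z g k.
  by rewrite /second_max; apply: (@le_bigmax_cond _ _ T 0 o); rewrite ho ok.
have hmk : second_max indep Z g k <= rho Z (g k) (Gset g k).
  apply: bigmax_le; first exact: rho_ge0.
  by move=> q /andP[hq _]; exact: (Hg k).2.
have hid : inv_disc indep Z g k <= inv_dmin indep Z g.
  by rewrite /inv_dmin; exact: (@le_bigmax_cond _ _ _ 0 k).
have h1 : rho Z o (Gset g k) <= inv_disc indep Z g k * rho Z (g k) (Gset g k).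
  rewrite /inv_disc; case: eqP => [m0|m0]; first by rewrite mul0r -m0.
  have m0' : 0 <= second_max indep Z g k by apply: bigmax_ge_id.
  have rp : 0 < rho Z (g k) (Gset g k).
    by apply: lt_le_trans hmk; rewrite lt_neqAle eq_sym m0'; apply/andP; split=> //; apply/eqP.
  by rewrite divfK // gt_eqF.
apply: le_trans h1 _; apply: ler_wpM2r => //; exact: rho_ge0.
Qed.

Lemma key i : (i <= K)%N -> forall W : {set T}, indep W -> #|W| = i ->
  (forall x, x \in W -> x \in Gset g K -> x \in Gset g i) ->
  \sum_(o in W :\: Gset g K) rho Z o (Gset g K) <=
  inv_dmin indep Z g * \sum_(k : 'I_K | (k < i)%N && (g k \notin W)) rho Z (g k) (Gset g k).
Proof.
elim: i => [|i IH] hi W iW cW hW.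
  move/eqP: cW; rewrite cards_eq0 => /eqP ->.
  by rewrite set0D big_set0 big_pred0 // mulr0.
set k0 := Ordinal hi.
have GS : Gset g i.+1 = g k0 |: Gset g i by exact: (GsetS k0).
case hk: (g k0 \in W).
  have iW' : indep (W :\ g k0) by apply: hered iW; exact: subsetDl.
  have cW' : #|W :\ g k0| = i.
    by move: cW; rewrite (cardsD1 (g k0) W) hk add1n => -[].
  have hW' : forall x, x \in W :\ g k0 -> x \in Gset g K -> x \in Gset g i.
    move=> x; rewrite inE => /andP[xk xW] xG; have := hW x xW xG.
    by rewrite GS inE (negbTE xk).
  have := IH (ltnW hi) _ iW' cW' hW'.
  have -> : (W :\ g k0) :\: Gset g K = W :\: Gset g K.
    apply/setP => x; rewrite !inE; case: eqP => // ->; by rewrite memG.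
  rewrite (@sum_split i hi) hk /= add0r.
  congr (_ <= _ * _); apply: eq_bigl => k; rewrite !inE.
  case kl: (k < i)%N => //=.
  have : g k != g k0.
    apply/negP => /eqP /g_inj e; move: kl; by rewrite e /= ltnn.
  by move/negbTE => ->.
have [o] : exists2 o, o \in W :\: Gset g i & indep (o |: Gset g i).
  case: Hm => _ _ H; apply: H => //; first exact: indep_Gset (ltnW hi).
  by rewrite card_Gset ?cW // ltnW.
rewrite inE => /andP[oGi oW] io.
have ok0 : o != g k0 by apply: contraTneq oW => ->; rewrite hk.
have oG : o \notin Gset g K.
  apply/negP => oG; have := hW o oW oG; rewrite GS inE (negbTE oGi) orbF.
  by move/set1P => e; move: hk; rewrite -e oW.
have osb : o \in sbot indep (Gset g k0) by rewrite inE oGi io.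
have iW' : indep (W :\ o) by apply: hered iW; exact: subsetDl.
have cW' : #|W :\ o| = i.
  by move: cW; rewrite (cardsD1 o W) oW add1n => -[].
have hW' : forall x, x \in W :\ o -> x \in Gset g K -> x \in Gset g i.
  move=> x; rewrite inE => /andP[xk xW] xG; have := hW x xW xG.
  rewrite GS inE => /orP[/set1P e|//]; by move: hk; rewrite -e xW.
have IH' := IH (ltnW hi) _ iW' cW' hW'.
have oWG : o \in W :\: Gset g K by rewrite inE oG oW.
rewrite (big_setD1 o oWG) /=.
have -> : (W :\: Gset g K) :\ o = (W :\ o) :\: Gset g K.
  by apply/setP => x; rewrite !inE andbCA.
have h1 : rho Z o (Gset g K) <= inv_dmin indep Z g * rho Z (g k0) (Gset g k0).
  apply: le_trans _ (@rho_le_delta k0 o osb ok0 (@not_before_i0 k0 o osb oG)).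
  by apply: submod_gen; apply: Gset_mono; apply: ltnW.
rewrite (@sum_split i hi) hk /= mulrDr.
have -> : \sum_(k : 'I_K | (k < i)%N && (g k \notin W)) rho Z (g k) (Gset g k) =
          \sum_(k : 'I_K | (k < i)%N && (g k \notin W :\ o)) rho Z (g k) (Gset g k).
  apply: eq_bigl => k; rewrite !inE.
  have : g k != o by apply: contraNneq oG => <-; exact: memG.
  by move/negbTE => ->.
by apply: lerD.
Qed.

Lemma sub_sum (G0 S : {set T}) :
  Z (G0 :|: S) <= Z G0 + \sum_(o in S) rho Z o G0.
Proof.
move: {2}#|S| (erefl #|S|) => n; elim: n S => [|n IH] S cS.
  by move/eqP: cS; rewrite cards_eq0 => /eqP ->; rewrite setU0 big_set0 addr0.
have [x xS] : exists x, x \in S by apply/card_gt0P; rewrite cS.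
rewrite (big_setD1 x xS) /=.
have e : G0 :|: S = x |: (G0 :|: (S :\ x)).
  by apply/setP => y; rewrite !inE; case: eqP => // ->; rewrite xS !orbT.
have cS' : #|S :\ x| = n by move: cS; rewrite (cardsD1 x S) xS add1n => -[].
have := IH _ cS'; rewrite e.
have := @submod_gen x G0 (G0 :|: (S :\ x)) (subsetUl _ _).
rewrite /rho; lra.
Qed.

Lemma sup_sum (O S : {set T}) : (forall x, x \in S -> x \notin O) ->
  Z O + (1 - c) * \sum_(o in S) rho Z o set0 <= Z (O :|: S).
Proof.
move: {2}#|S| (erefl #|S|) => n; elim: n S => [|n IH] S cS hS.
  by move/eqP: cS; rewrite cards_eq0 => /eqP ->; rewrite setU0 big_set0 mulr0 addr0.
have [x xS] : exists x, x \in S by apply/card_gt0P; rewrite cS.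
rewrite (big_setD1 x xS) /= mulrDr.
have e : O :|: S = x |: (O :|: (S :\ x)).
  by apply/setP => y; rewrite !inE; case: eqP => // ->; rewrite xS !orbT.
have cS' : #|S :\ x| = n by move: cS; rewrite (cardsD1 x S) xS add1n => -[].
have hS' : forall y, y \in S :\ x -> y \notin O.
  by move=> y; rewrite inE => /andP[_ /hS].
have := IH _ cS' hS'; rewrite e.
have xn : x \notin O :|: (S :\ x) by rewrite !inE eqxx (negbTE (hS x xS)).
have := @curv_lb x _ xn.
rewrite /rho; lra.
Qed.

Lemma arith {zo zg a b y x cc dd : R} : a <= zg + b -> zo + (1 - cc) * y <= a ->
  b <= dd * x -> (1 - cc) * x <= (1 - cc) * y -> zo <= zg + (cc + dd - 1) * x.
Proof. move=> *; nra. Qed.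

Lemma main (Omega : {set T}) : indep Omega -> #|Omega| = K -> 0 < Z Omega ->
  Num.min 1 (if c + inv_dmin indep Z g == 0 then 1
             else (c + inv_dmin indep Z g)^-1)
    <= Z (Gset g K) / Z Omega.
Proof.
move=> iO cO ZOp.
set G := Gset g K. set d := inv_dmin indep Z g.
set X := \sum_(k : 'I_K | (k < K)%N && (g k \notin Omega)) rho Z (g k) (Gset g k).
have hkey := @key K (leqnn K) Omega iO cO (fun x _ xG => xG).
have h1 := sub_sum G (Omega :\: G).
have e1 : G :|: (Omega :\: G) = Omega :|: G.
  by apply/setP => x; rewrite !inE; case: (x \in G); rewrite ?orbT ?orbF.
rewrite e1 in h1.
have h2 : Z Omega + (1 - c) * \sum_(o in G :\: Omega) rho Z o set0 <= Z (Omega :|: (G :\: Omega)).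
  by apply: sup_sum => x; rewrite inE => /andP[].
have e2 : Omega :|: (G :\: Omega) = Omega :|: G.
  by apply/setP => x; rewrite !inE; case: (x \in Omega); rewrite ?orbT ?orbF.
rewrite e2 in h2.
have hY : X <= \sum_(o in G :\: Omega) rho Z o set0.
  have -> : G :\: Omega = [set g k | k in [pred k : 'I_K | (k < K)%N && (g k \notin Omega)]].
    apply/setP => x; rewrite !inE; apply/andP/imsetP => [[xO /memGset [j _ xj]]|[j]].
      by exists j; rewrite // inE ltn_ord -xj.
    by rewrite inE => /andP[_ jO] ->; split=> //; apply: memG.
  rewrite big_imset /=; last by move=> ? ? _ _; exact: g_inj.
  apply: ler_sum => k _; apply: submod_gen; exact: sub0set.
have hXZ : X <= Z G := @sum_le_Z (fun k => g k \notin Omega) K (leqnn K).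
have hX0 : 0 <= X by apply: sumr_ge0 => k _; exact: rho_ge0.
have c1 := c_le1.
have hcY : (1 - c) * X <= (1 - c) * \sum_(o in G :\: Omega) rho Z o set0.
  by apply: ler_wpM2l => //; lra.
have hZ : Z Omega <= Z G + (c + d - 1) * X.
  exact: (arith h1 h2 hkey hcY).
case: (lerP (c + d) 1) => hs.
  have : (c + d - 1) * X <= 0 by rewrite mulr_le0_ge0 // subr_le0.
  move=> hn; rewrite /Num.min ge_min; apply/orP; left.
  rewrite ler_pdivlMr // mul1r; lra.
have hs0 : c + d != 0 by apply/eqP => e; move: hs; rewrite e ltr10.
rewrite (negbTE hs0) ge_min; apply/orP; right.
have : (c + d - 1) * X <= (c + d - 1) * Z G by apply: ler_wpM2l => //; lra.
move=> hm.
have hsp : 0 < c + d by lra.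
rewrite ler_pdivlMr // -ler_pdivlMl ?invr_gt0 // invrK.
lra.
Qed.

End Proof.

Theorem theorem3 (T : finType) (R : realFieldType)
    (indep : {set T} -> bool) (K : nat) (Z : {set T} -> R) (c : R)
    (Omega : {set T}) (g : 'I_K -> T) :
  is_matroid indep -> is_rank indep K -> (1 <= K)%N ->
  monotone Z -> submodular Z -> Z set0 = 0 -> is_curvature Z c ->
  indep Omega -> #|Omega| = K -> (forall S, indep S -> Z S <= Z Omega) ->
  0 < Z Omega ->
  is_greedy_run indep Z g ->
  Num.min 1 (if c + inv_dmin indep Z g == 0 then 1
             else (c + inv_dmin indep Z g)^-1)
    <= Z (Gset g K) / Z Omega.
Proof.
move=> Hm _ _ Hmono Hsub HZ0 Hcurv iO cO _ ZOp Hg.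
exact: (@main _ _ _ _ _ _ _ Hm Hmono Hsub HZ0 Hcurv Hg Omega iO cO ZOp).
Qed.
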